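(* Let $A,B$ be smooth functions of $\rho$ on an interval containing $[\rho_-,\rho_+]$ with $A^2+B^2=1$ at $\rho=\rho_\pm$ and $A^2+B^2>1$ on $(\rho_-,\rho_+)$. Suppose $A<0$ on $(\rho_-,\rho_+)$, that $A(\rho)=-1$ for exactly two values $\rho_1<\rho_2$ in $(\rho_-,\rho_+)$, and that there is $\rho_0\in(\rho_1,\rho_2)$ with $B(\rho_0)=0$, $B>0$ on $(\rho_-,\rho_0)$ and $B<0$ on $(\rho_0,\rho_+)$. Then the $(+)$ family generates exactly one horizon, the circle $\rho=\rho_1$, and the $(-)$ family generates exactly one horizon, the circle $\rho=\rho_2$.
   Context: Acoustic metric in the plane with polar coordinates $(\rho,\varphi)$: Hamiltonian $H=(\tau+A\xi_\rho+B\xi_\varphi/\rho)^2-\xi_\rho^2-(\xi_\varphi/\rho)^2$, $A=A(\rho)$, $B=B(\rho)$. The ergoregion is the annulus $\rho_-<\rho<\rho_+$ where $A^2+B^2>1$. Zero-energy null geodesics are the null bicharacteristics with $\tau=0$ parametrized by $t$; on them $\xi_\rho=\frac{-AB\pm\sqrt{A^2+B^2-1}}{A^2-1}\,\xi_\varphi/\rho$, the sign defining the $(\pm)$ family. Writing $s=\sqrt{A^2+B^2-1}$, their equations of motion in the ergoregion are $$\frac{d\rho^\pm}{dt}=\frac{A(A^2+B^2-1)\pm Bs}{A^2+B^2},\qquad \frac{d\varphi^\pm}{dt}=\frac{s\,(Bs\mp A)}{\rho\,(A^2+B^2)}.$$ A horizon generated by the $(\pm)$ family is a circle $\{\rho=c\}$,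 $c\in(\rho_-,\rho_+)$, which is a closed trajectory of that family, i.e. $d\rho^\pm/dt=0$ and $d\varphi^\pm/dt\neq0$ at $\rho=c$. *)

(* Defs.v *)
From Stdlib Require Import Reals Lra.
Open Scope R_scope.

Definition smooth_on (f : R -> R) (a b : R) : Prop :=
  exists D : nat -> R -> R,
    D 0%nat = f /\
    forall (k : nat) (x : R), a < x < b ->
      derivable_pt_lim (D k) x (D (S k) x).

(* The two families of zero-energy null geodesics. *)
Inductive family := Plus | Minus.

Definition fsgn (f : family) : R := match f with Plus => 1 | Minus => -1 end.

Definition sfun (A B : R -> R) (r : R) : R := sqrt (A r ^ 2 + B r ^ 2 - 1).

Definition drho (f : family) (A B : R -> R) (r : R) : R :=
  (A r * (A r ^ 2 + B r ^ 2 - 1) + fsgn f * B r * sfun A B r)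
  / (A r ^ 2 + B r ^ 2).

Definition dphi (f : family) (A B : R -> R) (r : R) : R :=
  sfun A B r * (B r * sfun A B r - fsgn f * A r)
  / (r * (A r ^ 2 + B r ^ 2)).

(* The circle {rho = c}, c in the ergoregion (rho_-, rho_+), is a horizon
   generated by family f: a closed trajectory of that family. *)
Definition is_horizon (f : family) (A B : R -> R) (rm rp c : R) : Prop :=
  rm < c < rp /\ drho f A B c = 0 /\ dphi f A B c <> 0.

(* Main.v *)
Require Import Defs.
From Stdlib Require Import Reals Lra Psatz.
Open Scope R_scope.

Lemma key1 (a b sg : R) : a ^ 2 + b ^ 2 > 1 -> a < 0 -> sg * sg = 1 ->
  (a * (a ^ 2 + b ^ 2 - 1) + sg * b * sqrt (a ^ 2 + b ^ 2 - 1)) / (a ^ 2 + b ^ 2) = 0 ->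
  a = -1 /\ sg * b > 0.
Proof.
  intros H1 Ha Hsg H.
  set (s := sqrt (a ^ 2 + b ^ 2 - 1)) in *.
  assert (hs2 : s * s = a ^ 2 + b ^ 2 - 1) by (apply sqrt_sqrt; lra).
  assert (hs : 0 < s) by (apply sqrt_lt_R0; lra).
  assert (hn : a * (a ^ 2 + b ^ 2 - 1) + sg * b * s = 0).
  { unfold Rdiv in H. apply Rmult_integral in H. destruct H as [H|H]; auto.
    exfalso. apply (Rinv_neq_0_compat (a ^ 2 + b ^ 2)); [lra|auto]. }
  assert (he : s * (a * s + sg * b) = 0) by (replace (s * (a * s + sg * b)) with (a * (s * s) + sg * b * s) by ring; rewrite hs2; lra).
  apply Rmult_integral in he. destruct he as [he|he]; [lra|].
  assert (hb : b = - sg * a * s).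
  { assert (sg * (a * s + sg * b) = 0) by (rewrite he; ring).
    replace (sg * (a * s + sg * b)) with (sg * a * s + (sg * sg) * b) in H0 by ring.
    rewrite Hsg in H0. lra. }
  assert (ha2 : (a * a - 1) * (a * a + b * b) = 0).
  { assert (b * b = a * a * (s * s)) by (rewrite hb; replace (- sg * a * s * (- sg * a * s)) with ((sg*sg) * (a*a*(s*s))) by ring; rewrite Hsg; ring). nra. }
  apply Rmult_integral in ha2. destruct ha2 as [h|h]; [|nra].
  split; nra.
Qed.

Lemma key2 (a b sg r : R) : 0 < r -> a = -1 -> sg * sg = 1 -> sg * b > 0 ->
  (a * (a ^ 2 + b ^ 2 - 1) + sg * b * sqrt (a ^ 2 + b ^ 2 - 1)) / (a ^ 2 + b ^ 2) = 0 /\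
  sqrt (a ^ 2 + b ^ 2 - 1) * (b * sqrt (a ^ 2 + b ^ 2 - 1) - sg * a) / (r * (a ^ 2 + b ^ 2)) <> 0.
Proof.
  intros Hr Ha Hsg Hb. subst a.
  assert (hs : sqrt ((-1) ^ 2 + b ^ 2 - 1) = sg * b).
  { replace ((-1) ^ 2 + b ^ 2 - 1) with ((sg * b) ^ 2) by (replace ((sg*b)^2) with (sg*sg*b*b) by ring; rewrite Hsg; ring).
    apply sqrt_pow2; lra. }
  rewrite hs. split.
  - replace (-1 * ((-1) ^ 2 + b ^ 2 - 1) + sg * b * (sg * b)) with 0.
    + unfold Rdiv; ring.
    + replace (sg * b * (sg * b)) with (sg*sg*b*b) by ring. rewrite Hsg. ring.
  - replace (sg * b * (b * (sg * b) - sg * -1)) with (sg * sg * b * (b*b + 1)) by ring.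
    rewrite Hsg. unfold Rdiv. apply Rmult_integral_contrapositive. split.
    + assert (b <> 0) by (intro; subst; lra). nra.
    + apply Rinv_neq_0_compat. nra.
Qed.

Theorem theorem4p3 (A B : R -> R) (a b rm rp rho0 rho1 rho2 : R) :
  0 < rm -> rm < rp ->
  a < rm -> rp < b ->
  smooth_on A a b -> smooth_on B a b ->
  A rm ^ 2 + B rm ^ 2 = 1 ->
  A rp ^ 2 + B rp ^ 2 = 1 ->
  (forall r, rm < r < rp -> A r ^ 2 + B r ^ 2 > 1) ->
  (forall r, rm < r < rp -> A r < 0) ->
  rm < rho1 -> rho1 < rho2 -> rho2 < rp ->
  A rho1 = -1 -> A rho2 = -1 ->
  (forall r, rm < r < rp -> A r = -1 -> r = rho1 \/ r = rho2) ->
  rho1 < rho0 < rho2 ->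
  B rho0 = 0 ->
  (forall r, rm < r < rho0 -> B r > 0) ->
  (forall r, rho0 < r < rp -> B r < 0) ->
  (forall c, is_horizon Plus A B rm rp c <-> c = rho1) /\
  (forall c, is_horizon Minus A B rm rp c <-> c = rho2).
Proof.
  intros H0 Hmp Ha Hb _ _ _ _ HS HA H1 H12 H2 HA1 HA2 Honly H0r HB0 HBl HBr.
  unfold is_horizon, drho, dphi, sfun; simpl.
  split; intro c; split.
  - intros [Hc [Hd _]].
    destruct (key1 (A c) (B c) 1 (HS c Hc) (HA c Hc) ltac:(ring) Hd) as [Hc1 Hbc].
    destruct (Honly c Hc Hc1) as [ -> | -> ]; auto.
    assert (B rho2 < 0) by (apply HBr; lra). lra.
  - intros ->. split; [lra|].
    apply key2; try lra. replace (1 * B rho1) with (B rho1) by ring. apply HBl; lra.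
  - intros [Hc [Hd _]].
    destruct (key1 (A c) (B c) (-1) (HS c Hc) (HA c Hc) ltac:(ring) Hd) as [Hc1 Hbc].
    destruct (Honly c Hc Hc1) as [ -> | -> ]; auto.
    assert (B rho1 > 0) by (apply HBl; lra). lra.
  - intros ->. split; [lra|].
    apply key2; try lra. assert (B rho2 < 0) by (apply HBr; lra). lra.
Qed.
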